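(* Let $p\in(0,1)$, $\gamma>0$, $B>0$, $w\in\mathbb{N}$, for each $N\in\mathbb{N}$ let $(\xi_j^{(N)*})_{j=1}^N$ be the unique maximizer of $\mathcal{T}_N$, and let $B^{(N)}=B-\sum_{i=1}^N\xi_i^{(N)*}$. Then $\lim_{N\to\infty}B^{(N)}=0$.
   Context: Logarithms are base 2. For an admissible (nonnegative, with sum at most $B$) sequence $(x_j)_{j\ge1}$, $$\mathcal{T}_\infty(x_1,x_2,\dots)=\sum_{k=1}^{w}p^2(1-p)^{k-1}\frac{k}{2}\log_2\!\Big(1+\gamma\frac{B}{k}\Big)+\sum_{j=1}^{\infty}p(1-p)^{j+w-1}\frac12\log_2(1+\gamma x_j)+\sum_{k=1}^{\infty}p^2(1-p)^{k+w-1}\frac{w}{2}\log_2\!\Big(1+\gamma\frac{B-\sum_{j=1}^{k}x_j}{w}\Big).$$ For $N\in\mathbb{N}$ and $\xi_1,\dots,\xi_N\ge0$ with $\sum_{j=1}^N\xi_j\le B$, define $\mathcal{T}_N(\xi_1,\dots,\xi_N)=\mathcal{T}_\infty(\xi_1,\dots,\xi_N,0,0,\dots)$. $\mathcal{T}_N$ has a unique maximizer over this compact set, denoted $(\xi_j^{(N)*})_{j=1}^N$. *)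

(* Defs.v *)
From Stdlib Require Import Reals Lra.
From Coquelicot Require Import Coquelicot.
Open Scope R_scope.

Definition log2 (x : R) : R := ln x / ln 2.

Fixpoint psum (f : nat -> R) (n : nat) : R :=
  match n with
  | O => 0
  | S m => psum f m + f m
  end.

(* Sequences are 0-indexed: x j (j >= 0) stands for the paper's x_{j+1}. *)
Definition T_inf (p gamma B : R) (w : nat) (x : nat -> R) : R :=
  (* sum_{k=1}^{w} p^2 (1-p)^{k-1} (k/2) log2(1 + gamma B / k), reindexed k = k'+1 *)
  psum (fun k => p ^ 2 * (1 - p) ^ k * (INR (S k) / 2)
                 * log2 (1 + gamma * (B / INR (S k)))) w
  (* sum_{j>=1} p (1-p)^{j+w-1} (1/2) log2(1 + gamma x_j), reindexed j = j'+1 *)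
  + Series (fun j => p * (1 - p) ^ (j + w) * (1 / 2) * log2 (1 + gamma * x j))
  (* sum_{k>=1} p^2 (1-p)^{k+w-1} (w/2) log2(1 + gamma (B - sum_{j=1}^k x_j)/w) *)
  + Series (fun k => p ^ 2 * (1 - p) ^ (k + w) * (INR w / 2)
                     * log2 (1 + gamma * ((B - psum x (S k)) / INR w))).

Definition pad (N : nat) (xi : nat -> R) : nat -> R :=
  fun j => if (j <? N)%nat then xi j else 0.

Definition T_N (p gamma B : R) (w N : nat) (xi : nat -> R) : R :=
  T_inf p gamma B w (pad N xi).

Definition admissibleN (B : R) (N : nat) (xi : nat -> R) : Prop :=
  (forall j, (j < N)%nat -> 0 <= xi j) /\ psum xi N <= B.

Definition is_maximizer_TN (p gamma B : R) (w N : nat) (xi : nat -> R) : Prop :=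
  admissibleN B N xi /\
  forall y, admissibleN B N y -> T_N p gamma B w N y <= T_N p gamma B w N xi.

(* Main.v *)
Require Import Defs.
From Stdlib Require Import Reals Lra Lia.
From Coquelicot Require Import Coquelicot.
Open Scope R_scope.

Lemma ln_le_sub1 x : 0 < x -> ln x <= x - 1.
Proof. intros Hx. pose proof (exp_ineq1_le (ln x)). rewrite exp_ln in H; lra. Qed.

Lemma ln_diff_ge a b : 0 < a -> 0 < b -> 1 - a / b <= ln b - ln a.
Proof.
  intros Ha Hb. assert (H := ln_le_sub1 (a / b)).
  unfold Rdiv in *. rewrite ln_mult, ln_Rinv in H; try apply Rinv_0_lt_compat; try lra.
  enough (ln a + - ln b <= a * / b - 1) by lra.
  apply H. apply Rmult_lt_0_compat; [lra| apply Rinv_0_lt_compat; lra].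
Qed.

Lemma ln_le_mono a b : 0 < a -> a <= b -> ln a <= ln b.
Proof. intros Ha Hab. destruct (Rle_lt_or_eq_dec _ _ Hab) as [h|h].
  - left; apply ln_increasing; lra.
  - subst; lra. Qed.

Lemma ln2_pos : 0 < ln 2.
Proof. pose proof ln_lt_2. lra. Qed.

Lemma log_bound gamma B t : 0 < gamma -> 0 <= t <= B ->
  0 <= log2 (1 + gamma * t) <= log2 (1 + gamma * B).
Proof.
  intros Hg Ht. unfold log2. pose proof ln2_pos.
  assert (0 <= gamma * t) by (apply Rmult_le_pos; lra).
  assert (gamma * t <= gamma * B) by (apply Rmult_le_compat_l; lra).
  assert (0 < / ln 2) by (apply Rinv_0_lt_compat; lra).
  split; unfold Rdiv.
  - apply Rmult_le_pos; [|lra]. rewrite <- ln_1. apply ln_le_mono; lra.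
  - apply Rmult_le_compat_r; [lra|]. apply ln_le_mono; lra.
Qed.

Lemma psum_nonneg z n : (forall i, (i < n)%nat -> 0 <= z i) -> 0 <= psum z n.
Proof. induction n; simpl; intros H. lra. pose proof (H n ltac:(lia)).
  assert (0 <= psum z n) by (apply IHn; intros; apply H; lia). lra. Qed.

Lemma psum_mono z m n : (forall i, (i < n)%nat -> 0 <= z i) -> (m <= n)%nat -> psum z m <= psum z n.
Proof. induction n; intros H Hmn.
  - replace m with 0%nat by lia. lra.
  - destruct (Nat.eq_dec m (S n)) as [->|hne]. lra.
    simpl. pose proof (H n ltac:(lia)).
    assert (psum z m <= psum z n) by (apply IHn; [intros; apply H; lia| lia]). lra. Qed.

Lemma psum_pad N z n : psum (pad N z) n = psum z (Nat.min n N).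
Proof. induction n. reflexivity.
  change (psum (pad N z) (S n)) with (psum (pad N z) n + pad N z n). rewrite IHn. unfold pad. destruct (Nat.ltb_spec n N).
  - rewrite Nat.min_l by lia. replace (Nat.min (S n) N) with (S n) by lia. reflexivity.
  - rewrite Nat.min_r by lia. replace (Nat.min (S n) N) with N by lia. lra. Qed.

Lemma pad_facts B N z : admissibleN B N z ->
  (forall i, 0 <= pad N z i <= B) /\ (forall n, 0 <= psum (pad N z) n <= psum z N).
Proof.
  intros [Hnn Hs].
  assert (Hp : forall n, 0 <= psum (pad N z) n <= psum z N).
  { intros n. rewrite psum_pad. split.
    - apply psum_nonneg. intros; apply Hnn; lia.
    - apply psum_mono. auto. lia. }
  split; auto. intros i. split.
  - unfold pad. destruct (Nat.ltb_spec i N); [apply Hnn; lia| lra].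
  - destruct (Hp (S i)), (Hp i). simpl in *. lra.
Qed.

Lemma psum_upd x y j d n : (forall i, y i = if (i =? j)%nat then x i + d else x i) ->
  psum y n = psum x n + if (j <? n)%nat then d else 0.
Proof. intros H. induction n; simpl. destruct (Nat.ltb_spec j 0); lra.
  rewrite IHn, H. destruct (Nat.eqb_spec n j); destruct (Nat.ltb_spec j n);
  destruct (Nat.ltb_spec j (S n)); try lia; lra. Qed.

Lemma exs (a b q M : R) (w : nat) (g : nat -> R) : 0 <= q < 1 -> (forall k, 0 <= g k <= M) ->
  ex_series (fun k => a * q ^ (k + w) * b * g k).
Proof.
  intros Hq Hg.
  apply (@ex_series_le R_AbsRing R_CompleteNormedModule) with (b := fun k => (Rabs (a * b) * M * q ^ w) * q ^ k).
  - intros k. change (norm ?x) with (Rabs x).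
    rewrite pow_add.
    replace (a * (q ^ k * q ^ w) * b * g k) with ((a * b) * (q ^ k * q ^ w * g k)) by ring.
    rewrite Rabs_mult. destruct (Hg k).
    assert (0 <= q ^ k) by (apply pow_le; lra). assert (0 <= q ^ w) by (apply pow_le; lra).
    rewrite (Rabs_pos_eq (q ^ k * q ^ w * g k)) by (repeat apply Rmult_le_pos; lra).
    replace (Rabs (a * b) * M * q ^ w * q ^ k) with (Rabs (a * b) * (q ^ k * q ^ w * M)) by ring.
    apply Rmult_le_compat_l. apply Rabs_pos. apply Rmult_le_compat_l. apply Rmult_le_pos; lra. lra.
  - apply (ex_series_scal_l (Rabs (a * b) * M * q ^ w) (fun k => q ^ k)).
    apply ex_series_geom. rewrite Rabs_pos_eq; lra.
Qed.

Lemma Series_zero : Series (fun _ => 0) = 0.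
Proof. rewrite (Series_ext _ (fun n => 0 * 0)) by (intros; ring).
  rewrite Series_scal_l. ring. Qed.

Definition a2 (p gamma : R) (w : nat) (Z : nat -> R) : nat -> R :=
  fun j => p * (1 - p) ^ (j + w) * (1 / 2) * log2 (1 + gamma * Z j).
Definition a3 (p gamma B : R) (w : nat) (Z : nat -> R) : nat -> R :=
  fun k => p ^ 2 * (1 - p) ^ (k + w) * (INR w / 2)
                     * log2 (1 + gamma * ((B - psum Z (S k)) / INR w)).

Lemma T_N_eq p gamma B w N z : T_N p gamma B w N z =
  psum (fun k => p ^ 2 * (1 - p) ^ k * (INR (S k) / 2)
                 * log2 (1 + gamma * (B / INR (S k)))) w
  + Series (a2 p gamma w (pad N z)) + Series (a3 p gamma B w (pad N z)).
Proof. reflexivity. Qed.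

Lemma a2_gain p gamma w X Y d j : 0 < p < 1 -> 0 < gamma -> 0 <= X j -> 0 < d ->
  Y j = X j + d ->
  p * (1 - p) ^ (j + w) / (2 * ln 2) * (gamma * d / (1 + gamma * (X j + d)))
  <= a2 p gamma w Y j - a2 p gamma w X j.
Proof.
  intros Hp Hg HX Hd HY. unfold a2, log2. rewrite HY. pose proof ln2_pos.
  assert (0 <= gamma * X j) by (apply Rmult_le_pos; lra).
  assert (0 < gamma * d) by (apply Rmult_lt_0_compat; lra).
  assert (Hd1 := ln_diff_ge (1 + gamma * X j) (1 + gamma * (X j + d)) ltac:(lra) ltac:(nra)).
  assert (0 <= (1-p) ^ (j + w)) by (apply pow_le; lra).
  set (K := p * (1 - p) ^ (j + w) / (2 * ln 2)).
  assert (0 <= K) by (unfold K; apply Rmult_le_pos; [apply Rmult_le_pos; lra| left; apply Rinv_0_lt_compat; lra]).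
  assert (E : p * (1 - p) ^ (j + w) * (1 / 2) * (ln (1 + gamma * (X j + d)) / ln 2) -
     p * (1 - p) ^ (j + w) * (1 / 2) * (ln (1 + gamma * X j) / ln 2)
     = K * (ln (1 + gamma * (X j + d)) - ln (1 + gamma * X j))) by (unfold K; field; lra).
  rewrite E. apply Rmult_le_compat_l; auto.
  replace (gamma * d / (1 + gamma * (X j + d))) with (1 - (1 + gamma * X j) / (1 + gamma * (X j + d))) by (field; nra).
  exact Hd1.
Qed.

Lemma a3_diff p gamma B w X Y d R m : 0 < p < 1 -> 0 < gamma -> 1 <= INR w -> 0 < d < R ->
  psum Y (S m) = psum X (S m) + d -> R <= B - psum X (S m) ->
  - (p ^ 2 * (1 - p) ^ (m + w) / (2 * ln 2)) * (gamma * d / (1 + gamma * ((R - d) / INR w)))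
  <= a3 p gamma B w Y m - a3 p gamma B w X m.
Proof.
  intros Hp Hg HW Hd HY HR. unfold a3, log2. rewrite HY. pose proof ln2_pos.
  set (W := INR w) in *. set (r := B - psum X (S m)) in *. assert (HW0 : W <> 0) by lra.
  replace (B - (psum X (S m) + d)) with (r - d) by (unfold r; ring).
  assert (0 < (R - d) / W) by (apply Rdiv_lt_0_compat; lra).
  assert ((R - d) / W <= (r - d) / W) by (apply Rmult_le_compat_r; [left; apply Rinv_0_lt_compat; lra| lra]).
  assert (0 < gamma * ((R - d) / W)) by (apply Rmult_lt_0_compat; lra).
  assert (gamma * ((R - d) / W) <= gamma * ((r - d) / W)) by (apply Rmult_le_compat_l; lra).
  set (b := 1 + gamma * ((r - d) / W)). set (a := 1 + gamma * (r / W)).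
  assert (Hb : 0 < b) by (unfold b; lra).
  assert (Ha : a = b + gamma * d / W) by (unfold a, b; field; exact HW0).
  assert (0 < gamma * d / W) by (apply Rdiv_lt_0_compat; [apply Rmult_lt_0_compat|]; lra).
  assert (Hd1 := ln_diff_ge a b ltac:(lra) Hb).
  assert (0 <= (1-p) ^ (m + w)) by (apply pow_le; lra).
  set (K := p ^ 2 * (1 - p) ^ (m + w) / (2 * ln 2)).
  assert (0 <= K) by (unfold K; apply Rmult_le_pos; [apply Rmult_le_pos; [apply pow_le|]; lra| left; apply Rinv_0_lt_compat; lra]).
  assert (E : p ^ 2 * (1 - p) ^ (m + w) * (W / 2) * (ln b / ln 2) -
     p ^ 2 * (1 - p) ^ (m + w) * (W / 2) * (ln a / ln 2) = K * (W * (ln b - ln a))) by (unfold K; field; lra).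
  rewrite E.
  assert (Hl : - (gamma * d / b) <= W * (ln b - ln a)).
  { replace (- (gamma * d / b)) with (W * (1 - a / b)) by (rewrite Ha; field; lra).
    generalize Hd1; intro; apply Rmult_le_compat_l; lra. }
  assert (Hm : gamma * d / b <= gamma * d / (1 + gamma * ((R - d) / W))).
  { unfold Rdiv. apply Rmult_le_compat_l. nra. apply Rinv_le_contravar; unfold b; lra. }
  replace (- K * (gamma * d / (1 + gamma * ((R - d) / W)))) with (K * (- (gamma * d / (1 + gamma * ((R - d) / W))))) by ring.
  apply Rmult_le_compat_l; auto. lra.
Qed.

Lemma ex_a2 p gamma B w N z : 0 < p < 1 -> 0 < gamma -> admissibleN B N z ->
  ex_series (a2 p gamma w (pad N z)).
Proof.
  intros Hp Hg Ha. destruct (pad_facts _ _ _ Ha) as [H1 H2].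
  apply (exs p (1/2) (1 - p) (log2 (1 + gamma * B)) w (fun k => log2 (1 + gamma * pad N z k))).
  lra. intros k. apply log_bound; auto.
Qed.

Lemma ex_a3 p gamma B w N z : 0 < p < 1 -> 0 < gamma -> (1 <= w)%nat -> admissibleN B N z ->
  ex_series (a3 p gamma B w (pad N z)).
Proof.
  intros Hp Hg Hw Ha. destruct (pad_facts _ _ _ Ha) as [H1 H2].
  assert (HW : 1 <= INR w) by (apply (le_INR 1 w) in Hw; simpl in Hw; lra).
  apply (exs (p ^ 2) (INR w / 2) (1 - p) (log2 (1 + gamma * B)) w
    (fun k => log2 (1 + gamma * ((B - psum (pad N z) (S k)) / INR w)))).
  lra. intros k. apply log_bound; auto.
  destruct (H2 (S k)). destruct Ha as [_ Hs].
  set (u := B - psum (pad N z) (S k)). assert (0 <= u) by (unfold u; lra).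
  split. apply Rdiv_le_0_compat; lra.
  assert (u / INR w <= u).
  { unfold Rdiv. rewrite <- (Rmult_1_r u) at 2. apply Rmult_le_compat_l; [lra|].
    rewrite <- Rinv_1. apply Rinv_le_contravar; lra. }
  unfold u in *; lra.
Qed.

Lemma ex_series_zero : ex_series (fun _ : nat => 0).
Proof.
  apply (ex_series_ext (fun k => 0 * (1/2) ^ (k + 0) * 0 * 0)). intros; apply Rmult_0_r.
  apply (exs 0 0 (1/2) 0 0 (fun _ => 0)). lra. intros; lra.
Qed.

Lemma Series_point v : Series (fun k => if (k =? 0)%nat then v else 0) = v.
Proof.
  assert (Hex : ex_series (fun k => if (k =? 0)%nat then v else 0)).
  { apply (ex_series_incr_n _ 1). simpl.
    exact ex_series_zero. }
  rewrite Series_incr_1 by exact Hex. simpl.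
  rewrite Series_zero. ring.
Qed.

Lemma key p gamma B w N x : 0 < p < 1 -> 0 < gamma -> 0 < B -> (1 <= w)%nat ->
  is_maximizer_TN p gamma B w N x -> forall j, (j < N)%nat -> (B - psum x N) / INR w <= x j.
Proof.
  intros Hp Hg HB Hw [Hadm Hmax] j Hj.
  assert (HW : 1 <= INR w) by (apply (le_INR 1 w) in Hw; simpl in Hw; lra).
  set (W := INR w) in *. set (R := B - psum x N).
  destruct (Rle_or_lt (R / W) (x j)) as [ok|Hlt]; [exact ok|exfalso].
  pose proof Hadm as [Hnn Hs].
  assert (xj0 := Hnn j Hj).
  assert (HRW : W * x j < R).
  { apply (Rmult_lt_compat_l W) in Hlt; [|lra]. replace (W * (R / W)) with R in Hlt by (field; lra). lra. }
  set (d := (R - W * x j) / (2 * (W + 1))).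
  assert (Hd0 : 0 < d) by (apply Rdiv_lt_0_compat; lra).
  assert (Hdd : (W + 1) * d = (R - W * x j) / 2) by (unfold d; field; lra).
  assert (Hd1 : x j + d < (R - d) / W).
  { apply (Rmult_lt_reg_l W); [lra|]. replace (W * ((R - d) / W)) with (R - d) by (field; lra). nra. }
  assert (Hd2 : d < R) by nra.
  set (y := fun i => if (i =? j)%nat then x j + d else x i).
  assert (Hy : forall i, y i = if (i =? j)%nat then x i + d else x i).
  { intros i; unfold y. destruct (Nat.eqb_spec i j); subst; reflexivity. }
  assert (Hpsy : psum y N = psum x N + d).
  { rewrite (psum_upd x y j d N Hy). destruct (Nat.ltb_spec j N); [reflexivity| lia]. }
  assert (Hadmy : admissibleN B N y).
  { split. intros i Hi. rewrite Hy. destruct (Nat.eqb_spec i j); [pose proof (Hnn i Hi); lra| auto].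
    rewrite Hpsy. unfold R in Hd2. lra. }
  specialize (Hmax y Hadmy).
  set (X := pad N x) in *. set (Y := pad N y) in *.
  assert (HYX : forall i, Y i = if (i =? j)%nat then X i + d else X i).
  { intros i. unfold Y, X, pad. rewrite Hy. destruct (Nat.eqb_spec i j); subst.
    destruct (Nat.ltb_spec j N); [reflexivity| lia]. reflexivity. }
  assert (HpsYX : forall n, psum Y n = psum X n + if (j <? n)%nat then d else 0).
  { intros n. apply psum_upd. exact HYX. }
  destruct (pad_facts _ _ _ Hadm) as [HX1 HX2]. fold X in HX1, HX2.
  assert (HXj : X j = x j).
  { unfold X, pad. destruct (Nat.ltb_spec j N); [reflexivity| lia]. }
  set (D := fun k => (a2 p gamma w Y k - a2 p gamma w X k) + (a3 p gamma B w Y k - a3 p gamma B w X k)).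
  assert (HexD : ex_series D).
  { apply (ex_series_ext (fun k => plus (plus (a2 p gamma w Y k) (opp (a2 p gamma w X k)))
       (plus (a3 p gamma B w Y k) (opp (a3 p gamma B w X k))))).
    intros; reflexivity.
    apply (@ex_series_plus R_AbsRing R_NormedModule); apply (@ex_series_minus R_AbsRing R_NormedModule).
    apply (ex_a2 _ _ B _ _ _ Hp Hg Hadmy). apply (ex_a2 _ _ B _ _ _ Hp Hg Hadm).
    apply (ex_a3 _ _ _ _ _ _ Hp Hg Hw Hadmy). apply (ex_a3 _ _ _ _ _ _ Hp Hg Hw Hadm). }
  assert (HTD : T_N p gamma B w N y - T_N p gamma B w N x = Series D).
  { rewrite !T_N_eq. unfold D. rewrite Series_plus, !Series_minus.
    fold X Y. ring.
    apply (ex_a3 _ _ _ _ _ _ Hp Hg Hw Hadmy). apply (ex_a3 _ _ _ _ _ _ Hp Hg Hw Hadm).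
    apply (ex_a2 _ _ B _ _ _ Hp Hg Hadmy). apply (ex_a2 _ _ B _ _ _ Hp Hg Hadm).
    apply (ex_series_ext (fun k => plus (a2 p gamma w Y k) (opp (a2 p gamma w X k)))).
    intros; reflexivity. apply (@ex_series_minus R_AbsRing R_NormedModule).
    apply (ex_a2 _ _ B _ _ _ Hp Hg Hadmy). apply (ex_a2 _ _ B _ _ _ Hp Hg Hadm).
    apply (ex_series_ext (fun k => plus (a3 p gamma B w Y k) (opp (a3 p gamma B w X k)))).
    intros; reflexivity. apply (@ex_series_minus R_AbsRing R_NormedModule).
    apply (ex_a3 _ _ _ _ _ _ Hp Hg Hw Hadmy). apply (ex_a3 _ _ _ _ _ _ Hp Hg Hw Hadm). }
  assert (HD0 : Series D = Series (fun k => D (j + k)%nat)).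
  { apply Series_incr_n_aux. intros k Hk. unfold D.
    assert (E2 : a2 p gamma w Y k = a2 p gamma w X k).
    { unfold a2. rewrite HYX. destruct (Nat.eqb_spec k j); [lia| reflexivity]. }
    assert (E3 : a3 p gamma B w Y k = a3 p gamma B w X k).
    { unfold a3. rewrite HpsYX. destruct (Nat.ltb_spec j (S k)); [lia|]. rewrite Rplus_0_r. reflexivity. }
    rewrite E2, E3. ring. }
  set (q := 1 - p).
  set (c := p * q ^ w / (2 * ln 2)).
  set (g := gamma * d / (1 + gamma * (x j + d))).
  set (L := gamma * d / (1 + gamma * ((R - d) / W))).
  set (E := fun k => (if (k =? 0)%nat then c * q ^ j * g else 0) - c * p * L * q ^ j * q ^ k).
  pose proof ln2_pos.
  assert (Hq : 0 < q < 1) by (unfold q; lra).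
  assert (Hgeo : ex_series (fun k => c * p * L * q ^ j * q ^ k)).
  { apply (ex_series_scal_l (c * p * L * q ^ j) (fun k => q ^ k)).
    apply ex_series_geom. rewrite Rabs_pos_eq; lra. }
  assert (Hpt : ex_series (fun k => if (k =? 0)%nat then c * q ^ j * g else 0)).
  { apply (ex_series_incr_n _ 1). simpl.
    exact ex_series_zero. }
  assert (HexE : ex_series E).
  { apply (ex_series_ext (fun k => plus (if (k =? 0)%nat then c * q ^ j * g else 0) (opp (c * p * L * q ^ j * q ^ k)))).
    intros; reflexivity. apply (@ex_series_minus R_AbsRing R_NormedModule); auto. }
  assert (HSE : Series E = c * q ^ j * g - c * q ^ j * L).
  { unfold E. rewrite Series_minus by auto. rewrite Series_point, Series_scal_l, Series_geom.
    unfold q. field. lra. rewrite Rabs_pos_eq; lra. }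
  assert (HexDj : ex_series (fun k => D (j + k)%nat)) by (apply ex_series_incr_n; exact HexD).
  assert (Hpw : forall k, E k <= D (j + k)%nat).
  { intros k.
    assert (Ha3 : - (p ^ 2 * (1 - p) ^ ((j + k) + w) / (2 * ln 2)) * L
                  <= a3 p gamma B w Y (j + k) - a3 p gamma B w X (j + k)).
    { apply (a3_diff p gamma B w X Y d R (j + k)); auto.
      rewrite HpsYX. destruct (Nat.ltb_spec j (S (j + k))); [reflexivity| lia].
      unfold R. destruct (HX2 (S (j + k))). lra. }
    replace (- (p ^ 2 * (1 - p) ^ ((j + k) + w) / (2 * ln 2)) * L) with (- (c * p * L * q ^ j * q ^ k)) in Ha3
      by (unfold c, q; rewrite !pow_add; field; lra).
    unfold E, D. destruct (Nat.eqb_spec k 0).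
    - subst k. rewrite Nat.add_0_r in *.
      assert (Ha2 := a2_gain p gamma w X Y d j Hp Hg ltac:(lra) Hd0 ltac:(rewrite HYX, Nat.eqb_refl; reflexivity)).
      rewrite HXj in Ha2.
      fold g in Ha2.
      replace (p * (1 - p) ^ (j + w) / (2 * ln 2) * g) with (c * q ^ j * g) in Ha2
        by (unfold c, q; rewrite pow_add; field; lra).
      simpl in Ha3. lra.
    - assert (E2 : a2 p gamma w Y (j + k) = a2 p gamma w X (j + k)).
      { unfold a2. rewrite HYX. destruct (Nat.eqb_spec (j + k) j); [lia| reflexivity]. }
      rewrite E2. lra. }
  assert (HSD : Series E <= Series D).
  { rewrite HD0. assert (Series (fun _ => 0) <= Series (fun k => D (j + k)%nat - E k)).
    { apply Series_le. intros n; specialize (Hpw n); lra.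
      apply (ex_series_ext (fun k => plus (D (j + k)%nat) (opp (E k)))). intros; reflexivity.
      apply (@ex_series_minus R_AbsRing R_NormedModule); auto. }
    rewrite Series_zero, Series_minus in H0 by auto. lra. }
  assert (HgL : L < g).
  { unfold L, g, Rdiv. apply Rmult_lt_compat_l. apply Rmult_lt_0_compat; lra.
    apply Rinv_lt_contravar. apply Rmult_lt_0_compat; nra. nra. }
  assert (0 < c * q ^ j).
  { unfold c. apply Rmult_lt_0_compat; [|apply pow_lt; lra].
    unfold Rdiv. apply Rmult_lt_0_compat. apply Rmult_lt_0_compat; [lra| apply pow_lt; lra].
    apply Rinv_0_lt_compat; lra. }
  assert (0 < Series E) by (rewrite HSE; nra).
  lra.
Qed.

Lemma psum_ge z c n : (forall j, (j < n)%nat -> c <= z j) -> INR n * c <= psum z n.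
Proof. induction n; intros H. simpl; lra.
  change (psum z (S n)) with (psum z n + z n).
  rewrite S_INR. assert (INR n * c <= psum z n) by (apply IHn; intros; apply H; lia).
  pose proof (H n ltac:(lia)). lra. Qed.

Lemma lim_bound K : is_lim_seq (fun N => K / (INR N + 1)) 0.
Proof.
  replace (Finite 0) with (Rbar_mult K 0) by (simpl; f_equal; ring).
  apply is_lim_seq_scal_l.
  replace (Finite 0) with (Rbar_inv p_infty) by reflexivity.
  apply is_lim_seq_inv. 2: discriminate.
  eapply is_lim_seq_plus. apply is_lim_seq_INR. apply is_lim_seq_const. reflexivity.
Qed.

Theorem corollary3 (p gamma B : R) (w : nat) (xi : nat -> nat -> R) :
  0 < p < 1 -> 0 < gamma -> 0 < B -> (1 <= w)%nat ->
  (forall N : nat, (1 <= N)%nat -> is_maximizer_TN p gamma B w N (xi N)) ->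
  is_lim_seq (fun N : nat => B - psum (xi N) N) 0.
Proof.
  intros Hp Hg HB Hw Hmax.
  assert (HW : 1 <= INR w) by (apply (le_INR 1 w) in Hw; simpl in Hw; lra).
  apply is_lim_seq_le_le with (u := fun _ => 0) (w := fun N => B * INR w / (INR N + 1)).
  2: apply is_lim_seq_const. 2: apply lim_bound.
  intros N. destruct N as [|N].
  - simpl. split. lra. replace (0 + 1) with 1 by ring. unfold Rdiv. rewrite Rinv_1. nra.
  - specialize (Hmax (S N) ltac:(lia)).
    pose proof (key _ _ _ _ _ _ Hp Hg HB Hw Hmax) as Hk.
    destruct Hmax as [[Hnn Hs] _].
    set (x := xi (S N)) in *. set (R := B - psum x (S N)) in *.
    set (W := INR w) in *.
    assert (Hge := psum_ge x (R / W) (S N) Hk).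
    set (M := INR (S N)) in *.
    assert (HM : 1 <= M) by (unfold M; apply (le_INR 1); lia).
    assert (HMN : M = INR N + 1) by (unfold M; apply S_INR).
    split. unfold R; lra.
    assert (M * R <= W * (B - R)).
    { replace (M * R) with (W * (M * (R / W))) by (field; lra).
      apply Rmult_le_compat_l; [lra|]. unfold R at 2. lra. }
    assert (0 <= R) by (unfold R; lra).
    apply (Rmult_le_reg_r (M + 1)); [lra|].
    replace (B * W / (M + 1) * (M + 1)) with (B * W) by (field; lra). nra.
Qed.
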